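(* Let $G$ be a finite simple undirected graph with maximum degree $\Delta$. Then $$\operatorname{adim}(G) \geq \frac{2(|V(G)|-1)}{\Delta+3}.$$
   Context: For a graph $G$, $d(u,v)$ is the shortest-path distance ($\infty$ if $u,v$ lie in different components), and $d_1(u,v)=\min(d(u,v),2)$. A set $A\subseteq V(G)$ is an adjacency resolving set if for all distinct $x,y\in V(G)$ there is $z\in A$ with $d_1(z,x)\neq d_1(z,y)$. The adjacency dimension $\operatorname{adim}(G)$ is the minimum cardinality of an adjacency resolving set. *)

(* Defs.v *)
From mathcomp Require Import all_boot all_order all_algebra.
Set Implicit Arguments. Unset Strict Implicit. Unset Printing Implicit Defensive.

Definition simple_graph (T : finType) (e : rel T) : Prop :=
  symmetric e /\ irreflexive e.

(* truncated distance d_1(u,v) = min(d(u,v), 2):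
   0 if u = v, 1 if u,v adjacent, 2 otherwise (d >= 2 or infinite). *)
Definition d1 (T : finType) (e : rel T) (u v : T) : nat :=
  if u == v then 0 else if e u v then 1 else 2.

Definition adj_resolving (T : finType) (e : rel T) (A : {set T}) : bool :=
  [forall x : T, forall y : T, (x != y) ==> [exists z in A, d1 e z x != d1 e z y]].

(* adjacency dimension: minimum cardinality of an adjacency resolving set
   (V(G) itself is resolving, so #|T| is an upper bound / neutral element). *)
Definition adim (T : finType) (e : rel T) : nat :=
  \big[minn/#|T|]_(A : {set T} | adj_resolving e A) #|A|.

Definition max_degree (T : finType) (e : rel T) : nat :=
  \max_(v : T) #|[set w | e v w]|.

(* Main.v *)
Require Import Defs.
From mathcomp Require Import all_boot all_order all_algebra.
From mathcomp Require Import zify ring lra.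
Import Order.TTheory GRing.Theory Num.Theory.

Lemma sum_bool (T : finType) (B : {set T}) (P : pred T) :
  \sum_(v in B) (P v : nat) = #|[set v in B | P v]|.
Proof.
rewrite -sum1_card big_mkcond [RHS]big_mkcond /=; apply: eq_bigr => v _.
by rewrite !inE; case: (v \in B); case: (P v).
Qed.

Lemma core (T : finType) (e : rel T) (He : simple_graph e) (A : {set T}) :
  adj_resolving e A -> 2 * #|T| <= #|A| * (max_degree e + 3) + 2.
Proof.
move=> HA; case: He => esym eirr.
set B := ~: A.
set f := fun v => [set a in A | e v a].
have finj : {in B &, injective f}.
  move=> x y; rewrite !inE => xA yA fxy; apply/eqP; apply/negPn/negP => nxy.
  move/forallP: HA => /(_ x) /forallP /(_ y); rewrite nxy /=.
  case/existsP=> z /andP [zA]; rewrite /d1.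
  have -> : (z == x) = false by apply/negbTE; apply: contraNneq xA => <-.
  have -> : (z == y) = false by apply/negbTE; apply: contraNneq yA => <-.
  have : (z \in f x) = (z \in f y) by rewrite fxy.
  rewrite /f /= !inE zA /= (esym x) (esym y) => ->.
  by rewrite eqxx.
set D := max_degree e.
have Hsum : \sum_(v in B) #|f v| <= #|A| * D.
  have -> : \sum_(v in B) #|f v| = \sum_(a in A) \sum_(v in B) (e a v : nat).
    rewrite exchange_big /=; apply: eq_bigr => v _.
    rewrite -sum_bool; apply: eq_bigr => a _; by rewrite esym.
  rewrite -sum_nat_const; apply: leq_sum => a _.
  apply: (@leq_trans (\sum_v (e a v : nat))).
    by rewrite [X in _ <= X](bigID (mem B)) /= leq_addr.
  have -> : \sum_v (e a v : nat) = #|[set w | e a w]|.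
    transitivity (\sum_(v in [set: T]) (e a v : nat)).
      by apply: eq_bigl => w; rewrite inE.
    by rewrite sum_bool; apply: eq_card => w; rewrite !inE.
  rewrite /D /max_degree.
  exact: (leq_bigmax a).
have Hone : #|[set v in B | #|f v| == 1%N]| <= #|A|.
  rewrite -(card_in_imset (f := f)); last first.
    by move=> x y /setIdP[xB _] /setIdP[yB _]; apply: finj.
  apply: (@leq_trans #|[set [set a] | a in A]|); last exact: leq_imset_card.
  apply: subset_leq_card; apply/subsetP => S /imsetP [v]; rewrite inE => /andP[_].
  case/cards1P => a fa ->; rewrite fa; apply/imsetP; exists a => //.
  have : a \in f v by rewrite fa set11.
  by rewrite inE => /andP[].
have Hzero : #|[set v in B | #|f v| == 0%N]| <= 1.
  rewrite -(card_in_imset (f := f)); last first.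
    by move=> x y /setIdP[xB _] /setIdP[yB _]; apply: finj.
  apply: (@leq_trans #|[set (set0 : {set T})]|); last by rewrite cards1.
  apply: subset_leq_card; apply/subsetP => S /imsetP [v]; rewrite inE => /andP[_].
  by rewrite cards_eq0 => /eqP -> ->; rewrite set11.
have Hper : \sum_(v in B) 2 <= \sum_(v in B) #|f v| + \sum_(v in B) (#|f v| == 1%N : nat)
     + 2 * \sum_(v in B) (#|f v| == 0%N : nat).
  rewrite big_distrr /= -!big_split /=; apply: leq_sum => v _.
  by case: #|f v| => [|[|m]].
rewrite sum_nat_const !sum_bool in Hper.
have HB := cardsC A; rewrite -/B in HB.
lia.
Qed.

Local Open Scope ring_scope.

Theorem theorem1p13 (T : finType) (e : rel T) (He : simple_graph e) :
  (2 * ((#|T|)%:R - 1)) / ((max_degree e)%:R + 3) <= (adim e)%:R :> rat.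
Proof.
have H : (2 * #|T| <= adim e * (max_degree e + 3) + 2)%N.
  rewrite /adim; apply: (big_ind (fun m => 2 * #|T| <= m * (max_degree e + 3) + 2)%N).
  - lia.
  - by move=> x y Hx Hy; rewrite /minn; case: ifP.
  - by move=> A HA; apply: core.
rewrite ler_pdivrMr; last by rewrite ltr_wpDl.
have : (2 * #|T|)%:R <= (adim e * (max_degree e + 3) + 2)%:R :> rat by rewrite ler_nat.
rewrite !natrD !natrM !natrD => h.
lra.
Qed.
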